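(* Let $q$ be a power of $2$. Let $b\in\mathbb{F}_q^*$ and $\delta\in\mathbb{F}_{q^2}$ with $b\,\mathrm{Tr}_{q^2/q}(\delta)=1$. Then the compositional inverse of $$P(x)=b(x^q+x+\delta)^{\frac{q^2+q}{2}+1}+x$$ over $\mathbb{F}_{q^2}$ is $$P^{-1}(x)=x+b\left(\mathrm{Tr}_{q^2/q}(\delta)^{-1}(x^q+x)^2+\mathrm{Tr}_{q^2/q}(\delta)^{-1}\delta^{q+1}+\delta\right)^{1+(q^2+q)/2}.$$
   Context: $\mathrm{Tr}_{q^2/q}(y)=y+y^q$. The compositional inverse of a permutation polynomial $f$ of $\mathbb{F}_{Q}$ is the unique polynomial $f^{-1}$ (modulo $x^Q-x$) with $f(f^{-1}(c))=f^{-1}(f(c))=c$ for all $c\in\mathbb{F}_Q$; in particular the statement includes that $P$ permutes $\mathbb{F}_{q^2}$. *)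

(* Defs.v *)
From HB Require Import structures.
From mathcomp Require Import all_boot all_order all_algebra all_field.
Set Implicit Arguments. Unset Strict Implicit. Unset Printing Implicit Defensive.
Import GRing.Theory.
Local Open Scope ring_scope.

Definition trq (F : finFieldType) (q : nat) (y : F) : F := y + y ^+ q.

Definition Ppoly (F : finFieldType) (q : nat) (b delta : F) (x : F) : F :=
  b * (x ^+ q + x + delta) ^+ ((q ^ 2 + q) %/ 2 + 1)%N + x.

Definition Pinv (F : finFieldType) (q : nat) (b delta : F) (x : F) : F :=
  x + b * ((trq q delta)^-1 * (x ^+ q + x) ^+ 2
           + (trq q delta)^-1 * delta ^+ (q + 1)%N + delta) ^+ (1 + (q ^ 2 + q) %/ 2)%N.

(* Main.v *)
Require Import Defs.
From HB Require Import structures.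
From mathcomp Require Import all_boot all_order all_algebra all_field.
From mathcomp Require Import ring zify.
Import GRing.Theory.
Local Open Scope ring_scope.

Lemma frob2 (F : finFieldType) (two0 : (2%:R : F) = 0) (n : nat) (x y : F) :
  (x + y) ^+ (2 ^ n) = x ^+ (2 ^ n) + y ^+ (2 ^ n).
Proof.
elim: n => [|n IH]; first by rewrite !expn0 !expr1.
rewrite expnSr !exprM IH.
have -> : forall a c : F, (a + c) ^+ 2 = a ^+ 2 + c ^+ 2 + a * c * 2%:R by move=> a c; ring.
by rewrite two0 mulr0 addr0.
Qed.

Theorem theorem3p4 (k : nat) (F : finFieldType) (b delta : F) :
  (0 < k)%N ->
  #|F| = ((2 ^ k) ^ 2)%N ->
  b ^+ (2 ^ k) = b -> b != 0 ->
  b * trq (2 ^ k) delta = 1 ->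
  (forall c : F, Ppoly (2 ^ k) b delta (Pinv (2 ^ k) b delta c) = c) /\
  (forall c : F, Pinv (2 ^ k) b delta (Ppoly (2 ^ k) b delta c) = c).
Proof.
move=> k0 cardF bq b0 bT.
set q := (2 ^ k)%N.
set h := (2 ^ k.-1)%N.
have qh : q = (h * 2)%N by rewrite /q /h -expnSr prednK.
have two0 : (2%:R : F) = 0.
  have := expf_card (-1 : F).
  rewrite cardF -signr_odd !oddX /= (negbTE (lt0n_neq0 k0)) /= expr0.
  move/eqP; rewrite -subr_eq0 opprK => /eqP <-.
  by [].
have xx : forall x : F, x + x = 0.
  by move=> x; rewrite -mulr2n -mulr_natr two0 mulr0.
have fr : forall x y : F, (x + y) ^+ q = x ^+ q + y ^+ q by move=> x y; exact: frob2.
have fix2 : forall x : F, x ^+ (q * q) = x.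
  by move=> x; rewrite -{2}(expf_card x) cardF expnS expn1.
set E := ((q ^ 2 + q) %/ 2)%N.
have EE : E = ((q + 1) * h)%N.
  rewrite /E qh.
  have -> : ((h * 2) ^ 2 + h * 2 = (h * 2 + 1) * h * 2)%N by ring.
  by rewrite mulnK.
set T := trq q delta.
have T0 : T != 0 by apply/eqP => T0; move: bT; rewrite -/T T0 mulr0 => /eqP; rewrite eq_sym oner_eq0.
have inv : forall c : F, Pinv q b delta (Ppoly q b delta c) = c.
  move=> x.
  rewrite /Ppoly /Pinv.
  set z := x ^+ q + x.
  set y := z + delta.
  have zq : z ^+ q = z by rewrite /z fr -exprM fix2 addrC.
  have yq : y ^+ q + y = T.
    rewrite /y fr zq /T /trq.
    have -> : z + delta ^+ q + (z + delta) = delta + delta ^+ q + (z + z) by ring.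
    by rewrite xx addr0.
  set m := y ^+ E.
  have m2 : m ^+ 2 = y ^+ (q + 1).
    rewrite /m -exprM (_ : (E * 2 = q * q + q)%N); last by rewrite EE qh; ring.
    by rewrite exprD fix2 addn1 exprS.
  have mq : m ^+ q = m.
    rewrite /m -exprM (_ : (E * q = (q * q + q) * h)%N); last by rewrite EE; ring.
    by rewrite exprM exprD fix2 -exprS -exprM EE addn1.
  have e1 : ((q ^ 2 + q) %/ 2 + 1)%N = E.+1 by rewrite addn1.
  have e2 : (1 + (q ^ 2 + q) %/ 2)%N = E.+1 by rewrite add1n.
  rewrite e1 e2 exprS -/m.
  set c := b * (y * m) + x.
  have cq : c ^+ q + c = m + z.
    rewrite /c fr exprMn exprMn bq mq.
    have -> : b * (y ^+ q * m) + x ^+ q + (b * (y * m) + x) = b * m * (y ^+ q + y) + z by rewrite /z; ring.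
    by rewrite yq mulrAC bT mul1r.
  have W : T^-1 * (c ^+ q + c) ^+ 2 + T^-1 * delta ^+ (q + 1) + delta = y.
    rewrite cq.
    have -> : (m + z) ^+ 2 = z * T + delta ^+ (q + 1).
      have -> : (m + z) ^+ 2 = m ^+ 2 + z ^+ 2 + m * z * 2%:R by ring.
      rewrite two0 mulr0 addr0 m2.
      rewrite (_ : y ^+ (q + 1) = (z + delta ^+ q) * (z + delta)); last by rewrite addn1 exprSr /y fr zq.
      rewrite addn1 (exprSr delta) /T /trq.
      have -> : (z + delta ^+ q) * (z + delta) + z ^+ 2 = z * (delta + delta ^+ q) + delta ^+ q * delta + z ^+ 2 * 2%:R by ring.
      by rewrite two0 mulr0 addr0.
    rewrite mulrDr (mulrC z) mulrA (mulVf T0) mul1r.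
    rewrite /y -!addrA; congr (_ + _).
    by set u := T^-1 * delta ^+ (q + 1); rewrite (addrA u u) xx add0r.
  rewrite W /c.
  rewrite exprS -/m.
  have -> : b * (y * m) + x + b * (y * m) = x + (b * (y * m) + b * (y * m)) by ring.
  by rewrite xx addr0.
split=> //.
have injP : injective (Ppoly q b delta) by exact: can_inj inv.
have bijP := injF_bij injP.
by apply/(bij_can_sym bijP).
Qed.
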